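(* Let $X=\{m_1,\dots,m_n\}$ be a Macaulay basis of $M$ and let $s_1,\dots,s_k$ be a generating set of $\operatorname{Syz}(\operatorname{lf}(m_1),\dots,\operatorname{lf}(m_n))$ consisting of homogeneous elements with respect to the $B$-grading of $R^{\oplus n}$ associated to $b_i=\deg m_i$. For each $j$ choose $h_j=(h_{j1},\dots,h_{jn})\in R^{\oplus n}$ with $\sum_is_{ji}m_i=\sum_ih_{ji}m_i$ such that $h_j=0$ if $\sum_is_{ji}m_i=0$, and otherwise every homogeneous component of $h_j$ has degree at most $\deg\big(\sum_is_{ji}m_i\big)$ (such $h_j$ arise from a reduction $\sum_is_{ji}m_i\to_X^*0$), and set $s'_j=s_j-h_j\in\operatorname{Syz}(m_1,\dots,m_n)$. Suppose $R^{\oplus n}$ carries a $B'$-grading refining this $B$-grading, and that $s_1,\dots,s_k$ is a Macaulay basis of $\operatorname{Syz}(\operatorname{lf}(m_1),\dots,\operatorname{lf}(m_n))$ with respect to the $B'$-grading. Then $s'_1,\dots,s'_k$ is a Macaulay basis of $\operatorname{Syz}(m_1,\dots,m_n)$ with respect to the $B'$-grading.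
   Context: Standing setup. $\mathbf{k}$ is a field. $(A,+,0)$ is a finitely generated cancellative commutative monoid with a well-ordered total order such that $0<a$ for $a\ne0$ and $a\le a'\Rightarrow a+c\le a'+c$. $R=\bigoplus_{a\in A}R_a$ is a commutative Noetherian $\mathbf{k}$-algebra with $R_aR_{a'}\subseteq R_{a+a'}$. $B$ (and likewise $B'$) is a well-ordered totally ordered set with an action $(a,b)\mapsto a\cdot b$ of $A$ with $0\cdot b=b$, $(a+a')\cdot b=a\cdot(a'\cdot b)$, monotone and cancellative in each argument. $N=\bigoplus_{b\in B}N_b$ is a Noetherian $R$-module with $R_aN_b\subseteq N_{a\cdot b}$; $M\subseteq N$ an $R$-submodule. For a nonzero element $m$ of a graded module, $\deg m$ is the largest degree of a nonzero homogeneous component and $\operatorname{lf}(m)$ is that component. A finite set of nonzero elements $\{m_1,\dots,m_n\}$ of a submodule $P$ of a graded module is a Macaulay basis of $P$ (w.r.t. that grading) if the submodule generated by $\{\operatorname{lf}(p):0\ne p\in P\}$ equals that generated by $\operatorname{lf}(m_1),\dots,\operatorname{lf}(m_n)$. Reduction: $W_b(X)=\operatorname{span}_{\mathbf{k}}\{r\operatorname{lf}(x): x\in X,\ r\in R\text{ homogeneous},\ r\operatorname{lf}(x)\in N_b\}$; $m\to_X m'$ iff $\{b: m_b\ne0,\ m_b\in W_b(X)\}$ is nonempty with maximum $b$ and $m'=m-\sum_jr_jx_j$ with $x_j\in X$, $r_j$ homogeneous, $r_j\operatorname{lf}(x_j)\in N_b$, $m_b=\sum_jr_j\operatorname{lf}(x_j)$;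 $\to_X^*$ reflexive–transitive closure. Syzygies: $\operatorname{Syz}(u_1,\dots,u_n)=\{(f_i)\in R^{\oplus n}:\sum_if_iu_i=0\}$. The $B$-grading of $R^{\oplus n}$ associated to $b_1,\dots,b_n$ is $(R^{\oplus n})_b=\bigoplus_i\bigoplus_{a\in A:\ a\cdot b_i=b}R_ae_i$. A $B'$-grading $R^{\oplus n}=\bigoplus_{b'\in B'}(R^{\oplus n})'_{b'}$ (with $R_a(R^{\oplus n})'_{b'}\subseteq(R^{\oplus n})'_{a\cdot b'}$) refines the $B$-grading if there is an order-preserving map $g:B'\to B$ with $g(a\cdot b')=a\cdot g(b')$ and $(R^{\oplus n})_b=\bigoplus_{b'\in g^{-1}(b)}(R^{\oplus n})'_{b'}$ for all $b\in B$. *)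

(* Defs.v *)
From HB Require Import structures.
From mathcomp Require Import all_boot all_order all_algebra.
From Stdlib Require Import ClassicalEpsilon.
Set Implicit Arguments. Unset Strict Implicit. Unset Printing Implicit Defensive.
Import Order.TTheory GRing.Theory.
Local Open Scope ring_scope.

Definition is_submod (R : pzRingType) (V : lmodType R) (P : V -> Prop) : Prop :=
  [/\ P 0, (forall x y, P x -> P y -> P (x + y)) & (forall (r : R) x, P x -> P (r *: x))].

Definition spanP (R : pzRingType) (V : lmodType R) (G : V -> Prop) (x : V) : Prop :=
  exists s : seq V, (forall i : 'I_(size s), G (nth 0 s i)) /\
    exists c : 'I_(size s) -> R, x = \sum_(i < size s) c i *: nth 0 s i.

Definition fin_gen (R : pzRingType) (V : lmodType R) (P : V -> Prop) : Prop :=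
  exists (l : nat) (g : 'I_l -> V), forall x, P x <-> spanP (fun y => exists i, y = g i) x.

Definition noetherian_mod (R : pzRingType) (V : lmodType R) : Prop :=
  forall P : V -> Prop, is_submod P -> fin_gen P.

Definition noetherian_ring (R : comPzRingType) : Prop := noetherian_mod R^o.

(* V = \bigoplus_{i in I} V_i as k-vector spaces, given by the projections pi i
   onto the components V_i = { x | pi i x = x }. *)
Definition is_grading (k : fieldType) (R : comAlgType k) (I : eqType) (V : lmodType R)
    (pi : I -> V -> V) : Prop :=
  [/\ (forall i x y, pi i (x + y) = pi i x + pi i y),
      (forall i (c : k) x, pi i ((c%:A : R) *: x) = (c%:A : R) *: pi i x),
      (forall i j x, pi i (pi j x) = if i == j then pi j x else 0) &
      (forall x, exists s : seq I, [/\ uniq s, (forall i, i \notin s -> pi i x = 0)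
                                     & x = \sum_(i <- s) pi i x])].

Definition homog (I : Type) (V : zmodType) (pi : I -> V -> V) (i : I) (x : V) : Prop :=
  pi i x = x.

Definition is_deg (d : Order.disp_t) (I : orderType d) (V : zmodType)
    (pi : I -> V -> V) (x : V) (b : I) : Prop :=
  pi b x != 0 /\ (forall b', pi b' x != 0 -> (b' <= b)%O).

Definition is_lf (d : Order.disp_t) (I : orderType d) (V : zmodType)
    (pi : I -> V -> V) (x y : V) : Prop :=
  exists b, is_deg pi x b /\ y = pi b x.

Definition macaulay_basis (R : pzRingType) (V : lmodType R) (d : Order.disp_t) (I : orderType d)
    (pi : I -> V -> V) (P : V -> Prop) (n : nat) (m : 'I_n -> V) : Prop :=
  (forall i, m i != 0 /\ P (m i)) /\
  (forall y, spanP (fun z => exists p, [/\ P p, p != 0 & is_lf pi p z]) y <->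
             spanP (fun z => exists i, is_lf pi (m i) z) y).

Definition ordered_monoid (A : nmodType) (leA : rel A) : Prop :=
  [/\ (forall a, leA a a), (forall a b c, leA a b -> leA b c -> leA a c),
      (forall a b, leA a b -> leA b a -> a = b) & (forall a b, leA a b || leA b a)] /\
  [/\ well_founded (fun a b => leA a b && (a != b)),
      (forall a, a != 0 -> leA 0 a && (0 != a)) &
      (forall a a' c, leA a a' -> leA (a + c) (a' + c))].

Definition cancellative_fg_monoid (A : nmodType) : Prop :=
  (forall a a' c : A, a + c = a' + c -> a = a') /\
  (exists (l : nat) (gen : 'I_l -> A), forall a, exists c : 'I_l -> nat,
       a = \sum_(i < l) gen i *+ c i).

Definition ordered_action (A : nmodType) (leA : rel A) (d : Order.disp_t) (B : orderType d)
    (act : A -> B -> B) : Prop :=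
  [/\ well_founded (fun x y : B => (x < y)%O),
      (forall b, act 0 b = b) &
      (forall a a' b, act (a + a') b = act a (act a' b))] /\
  [/\
      (forall a a' b, leA a a' -> (act a b <= act a' b)%O),
      (forall a b b', (b <= b')%O -> (act a b <= act a b')%O),
      (forall a a' b, act a b = act a' b -> a = a') &
      (forall a b b', act a b = act a b' -> b = b')].

Definition graded_algebra (k : fieldType) (R : comAlgType k) (A : nmodType)
    (piR : A -> R -> R) : Prop :=
  is_grading (piR : A -> R^o -> R^o) /\
  (forall a a' (r r' : R), homog piR a r -> homog piR a' r' -> homog piR (a + a') (r * r')).

Definition graded_module (k : fieldType) (R : comAlgType k) (A : nmodType) (I : eqType)
    (V : lmodType R) (piR : A -> R -> R) (act : A -> I -> I) (pi : I -> V -> V) : Prop :=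
  is_grading pi /\
  (forall a b (r : R) x, homog piR a r -> homog pi b x -> homog pi (act a b) (r *: x)).

Definition comb (R : pzRingType) (V : lmodType R) (n : nat) (f : 'rV[R]_n) (u : 'I_n -> V) : V :=
  \sum_(i < n) f 0 i *: u i.

Definition syz (R : pzRingType) (V : lmodType R) (n : nat) (u : 'I_n -> V) (f : 'rV[R]_n) : Prop :=
  comb f u = 0.

(* The B-grading of R^n associated to b_1..b_n:
   (R^n)_b = \bigoplus_i \bigoplus_{a : a.b_i = b} R_a e_i.
   Since the action is cancellative in a, there is at most one such a for each i. *)
Definition assoc_grading (R : pzRingType) (A : nmodType) (I : eqType) (piR : A -> R -> R)
    (act : A -> I -> I) (n : nat) (bs : 'I_n -> I) (b : I) (f : 'rV[R]_n) : 'rV[R]_n :=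
  \row_(i < n) (let a := epsilon (inhabits (0 : A)) (fun a => act a (bs i) = b) in
                if act a (bs i) == b then piR a (f 0 i) else 0).

Definition refines (A : nmodType) (d : Order.disp_t) (B : orderType d)
    (d' : Order.disp_t) (B' : orderType d') (actB : A -> B -> B) (actB' : A -> B' -> B')
    (V : zmodType) (pi : B -> V -> V) (pi' : B' -> V -> V) : Prop :=
  exists g : B' -> B,
    [/\ (forall x y, (x <= y)%O -> (g x <= g y)%O),
        (forall a x, g (actB' a x) = actB a (g x)) &
        (forall b v, homog pi b v <-> (forall b', pi' b' v != 0 -> g b' = b))].

(* Main.v *)
Require Import Defs.
From HB Require Import structures.
From mathcomp Require Import all_boot all_order all_algebra.
From Stdlib Require Import ClassicalEpsilon.
Import Order.TTheory GRing.Theory.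
Local Open Scope ring_scope.
Set Implicit Arguments.

Section Gen.
Variables (k : fieldType) (R : comAlgType k) (I : eqType) (V : lmodType R) (pi : I -> V -> V).
Hypothesis Hg : is_grading pi.
Lemma gr_add i x y : pi i (x + y) = pi i x + pi i y.
Proof. by case: Hg => H1 _ _ _; exact: H1. Qed.
Lemma gr0 i : pi i 0 = 0.
Proof. have E := gr_add i 0 0; rewrite addr0 in E. by apply: (addrI (pi i 0)); rewrite addr0 -E. Qed.
Lemma grN i x : pi i (- x) = - pi i x.
Proof. by apply/eqP; rewrite -addr_eq0 -gr_add addNr gr0. Qed.
Lemma grB i x y : pi i (x - y) = pi i x - pi i y.
Proof. by rewrite gr_add grN. Qed.
Lemma gr_sum (J : Type) i (s : seq J) (F : J -> V) : pi i (\sum_(j <- s) F j) = \sum_(j <- s) pi i (F j).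
Proof. exact: (big_morph _ (gr_add i) (gr0 i)). Qed.
Lemma gr_idem i j x : pi i (pi j x) = if i == j then pi j x else 0.
Proof. by case: Hg => _ _ H3 _; exact: H3. Qed.
Lemma gr_dec x : exists s : seq I, (forall i, i \notin s -> pi i x = 0) /\ x = \sum_(i <- s) pi i x.
Proof. case: Hg => _ _ _ H4; have [s [_ H1 H2]] := H4 x. by exists s; split. Qed.
Lemma gr_homog i j x : homog pi j x -> pi i x = if i == j then x else 0.
Proof. by rewrite /homog => <-; rewrite gr_idem. Qed.
Lemma gr_nz x : x != 0 -> exists i, pi i x != 0.
Proof.
move=> nx; have [s [_ E]] := gr_dec x.
apply/not_all_not_ex => H; move/eqP: nx; apply; rewrite E big1_seq //.
by move=> i _; apply/eqP/negbNE/negP; apply: H.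
Qed.
End Gen.

Lemma seq_max (d : Order.disp_t) (T : orderType d) (l : seq T) : l != [::] ->
  exists2 x, x \in l & forall y, y \in l -> (y <= x)%O.
Proof.
elim: l => // a [|b l] IH _.
  by exists a; rewrite ?mem_head // => y; rewrite inE => /eqP ->.
have [x xin xmax] := IH isT.
case: (leP x a) => h.
  exists a; first exact: mem_head.
  move=> y; rewrite inE => /orP [/eqP -> //|/xmax yx]; exact: le_trans yx h.
exists x; first by rewrite inE xin orbT.
move=> y; rewrite inE => /orP [/eqP -> |/xmax //]; exact: ltW.
Qed.

Lemma deg_exists (d : Order.disp_t) (T : orderType d) (V : zmodType) (pi : T -> V -> V) x (l : seq T) :
  (forall i, pi i x != 0 -> i \in l) -> (exists i, pi i x != 0) -> exists b, is_deg pi x b.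
Proof.
move=> Hl [i0 Hi0].
have : [seq i <- l | pi i x != 0] != [::].
  by apply/eqP => E; have := mem_filter (fun i => pi i x != 0) i0 l; rewrite E Hi0 Hl.
move/seq_max => [b]; rewrite mem_filter => /andP [Hb _] Hmax.
exists b; split => // b' Hb'; apply: Hmax; by rewrite mem_filter Hb' Hl.
Qed.

Section Main.
Variables (k : fieldType) (R : comAlgType k) (A : nmodType)
  (dB : Order.disp_t) (B : orderType dB) (dB' : Order.disp_t) (B' : orderType dB')
  (actB : A -> B -> B) (N : lmodType R) (piR : A -> R -> R) (piN : B -> N -> N)
  (n : nat) (m : 'I_n -> N) (bdeg : 'I_n -> B)
  (piF' : B' -> 'rV[R]_n -> 'rV[R]_n) (g : B' -> B).
Hypothesis HRg : is_grading (piR : A -> R^o -> R^o).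
Hypothesis HNg : graded_module piR actB piN.
Hypothesis HFg : is_grading piF'.
Hypothesis canA : forall a a' b, actB a b = actB a' b -> a = a'.
Hypothesis canB : forall a b b', actB a b = actB a b' -> b = b'.
Hypothesis monB : forall a b b', (b <= b')%O -> (actB a b <= actB a b')%O.
Hypothesis gmono : forall x y, (x <= y)%O -> (g x <= g y)%O.
Hypothesis gref : forall b v, homog (assoc_grading piR actB bdeg) b v <-> (forall b', piF' b' v != 0 -> g b' = b).
Hypothesis Hdeg : forall i, is_deg piN (m i) (bdeg i).

Lemma piR_add a (x y : R) : piR a (x + y) = piR a x + piR a y.
Proof. by case: HRg => H1 _ _ _; exact: H1. Qed.
Lemma piR0 a : piR a 0 = 0.
Proof. have E := piR_add a 0 0; rewrite addr0 in E. by apply: (addrI (piR a 0)); rewrite addr0 -E. Qed.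
Lemma piR_sum a (s : seq A) (F : A -> R) : piR a (\sum_(j <- s) F j) = \sum_(j <- s) piR a (F j).
Proof. exact: (big_morph _ (piR_add a) (piR0 a)). Qed.
Lemma piR_idem a b (x : R) : piR a (piR b x) = if a == b then piR b x else 0.
Proof. by case: HRg => _ _ H3 _; exact: H3. Qed.
Lemma piR_dec (x : R) : exists s : seq A, (forall i, i \notin s -> piR i x = 0) /\ x = \sum_(i <- s) piR i x.
Proof. case: HRg => _ _ _ H4; have [s [_ H1 H2]] := H4 x. by exists s; split. Qed.

Let piB := assoc_grading piR actB bdeg.
Let eps c i := epsilon (inhabits (0 : A)) (fun a => actB a (bdeg i) = c).

Lemma piB_E c f i : (piB c f) 0 i = if actB (eps c i) (bdeg i) == c then piR (eps c i) (f 0 i) else 0.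
Proof. by rewrite mxE. Qed.

Lemma eps_spec c i a : actB a (bdeg i) = c -> eps c i = a.
Proof.
move=> H; apply: (@canA _ _ (bdeg i)); rewrite H; apply: (epsilon_spec (inhabits (0 : A)) (fun a => actB a (bdeg i) = c)).
by exists a.
Qed.

Lemma piB_Ea c f i a : actB a (bdeg i) = c -> (piB c f) 0 i = piR a (f 0 i).
Proof. by move=> H; rewrite piB_E (@eps_spec c i a H) H eqxx. Qed.

Lemma piB_add c x y : piB c (x + y) = piB c x + piB c y.
Proof. by apply/rowP => i; rewrite !mxE /=; case: ifP; rewrite ?addr0 // piR_add. Qed.
Lemma piB0 c : piB c 0 = 0.
Proof. by apply/rowP => i; rewrite !mxE /=; case: ifP; rewrite ?piR0. Qed.
Lemma piBN c x : piB c (- x) = - piB c x.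
Proof. by apply/eqP; rewrite -addr_eq0 -piB_add addNr piB0. Qed.
Lemma piBB c x y : piB c (x - y) = piB c x - piB c y.
Proof. by rewrite piB_add piBN. Qed.
Lemma piB_sum (J : Type) c (s : seq J) (F : J -> 'rV[R]_n) : piB c (\sum_(j <- s) F j) = \sum_(j <- s) piB c (F j).
Proof. exact: (big_morph _ (piB_add c) (piB0 c)). Qed.

Lemma piB_idem c c' x : piB c (piB c' x) = if c == c' then piB c' x else 0.
Proof.
apply/rowP => i; rewrite piB_E [piB c' x 0 i]piB_E.
case: (eqVneq c c') => [<-|ne].
  by rewrite piB_E; case: ifP => // ->; rewrite piR_idem eqxx.
rewrite mxE; case: ifP => // /eqP H1; case: ifP => [/eqP H2|_]; last by rewrite piR0.
rewrite piR_idem; case: eqP => // E; by move: ne; rewrite -H1 -H2 E eqxx.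
Qed.

Lemma piB_homog c c' y : piB c' y = y -> piB c y = if c == c' then y else 0.
Proof. by move=> <-; rewrite piB_idem. Qed.

Lemma piB_F c e v : piB c (piF' e v) = if c == g e then piF' e v else 0.
Proof.
apply: piB_homog; apply/gref => b'; rewrite gr_idem //.
by case: (eqVneq b' e) => [-> //|_]; rewrite eqxx.
Qed.

Lemma keyK b' v : piF' b' v = piF' b' (piB (g b') v).
Proof.
have [S [_ E]] := gr_dec HFg v.
rewrite [in RHS]E piB_sum gr_sum //.
rewrite [in LHS]E gr_sum //; apply: eq_bigr => e _.
rewrite piB_F; case: (eqVneq b' e) => [->|ne]; first by rewrite eqxx.
by case: ifP => _ //; rewrite gr0 // gr_idem // (negbTE ne).
Qed.

Lemma piB_supp c v : piB c v != 0 -> exists e, [/\ piF' e v != 0, c = g e &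
   forall S : seq B', (forall i, i \notin S -> piF' i v = 0) -> e \in S].
Proof.
have [S [HS E]] := gr_dec HFg v.
rewrite {1}E piB_sum => H.
have : has (fun e => piB c (piF' e v) != 0) S.
  apply/negPn/negP; rewrite -all_predC => /allP H2; move: H; rewrite big1_seq ?eqxx //.
  by move=> e /andP [_ /H2] /= /negPn /eqP.
move=> /hasP [e eS]; rewrite piB_F; case: (eqVneq c (g e)) => [->|]; last by rewrite eqxx.
move=> nz'.
exists e; split => // S' HS'; apply/negPn/negP => /HS' E0; by rewrite E0 eqxx in nz'.
Qed.

Lemma piB_deg v : v != 0 -> exists b, is_deg piB v b.
Proof.
move=> nv; have [S [HS E]] := gr_dec HFg v.
apply: (@deg_exists _ _ _ _ _ (map g S)).
  by move=> i /piB_supp [e [nz -> HeS]]; apply: map_f; exact: HeS S HS.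
have [e He] := gr_nz HFg v nv; exists (g e).
apply/eqP => H0; move: He; by rewrite keyK H0 gr0 // eqxx.
Qed.

Lemma LF v b z : is_deg piB v b -> (is_lf piF' v z <-> is_lf piF' (piB b v) z).
Proof.
move=> [Hb Hmax].
have i1 : forall b', piF' b' (piB b v) != 0 -> g b' = b.
  have Ht : homog piB b (piB b v) by rewrite /homog piB_idem eqxx.
  exact: (gref b (piB b v)).1 Ht.
have i2 : forall b', piF' b' v != 0 -> (g b' <= b)%O.
  move=> b' H; apply: Hmax; apply/eqP => H0; move: H; by rewrite keyK H0 gr0 // eqxx.
have i3 : forall b', g b' = b -> piF' b' (piB b v) = piF' b' v.
  by move=> b' <-; rewrite [RHS]keyK.
have [b'' Hb''] := gr_nz HFg _ Hb.
split.
- move=> [b' [[H1 H2] ->]].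
  have gb'' := i1 _ Hb''.
  have nz : piF' b'' v != 0 by rewrite -i3.
  have le1 := H2 _ nz.
  have gb' : g b' = b.
    apply/le_anti; rewrite (i2 _ H1) /= -gb''; exact: gmono.
  exists b'; split; [split|].
  + by rewrite i3.
  + by move=> b3 H3; apply: H2; rewrite -i3 // i1.
  + by rewrite i3.
- move=> [b' [[H1 H2] ->]].
  have gb' := i1 _ H1.
  exists b'; split; [split|].
  + by rewrite -i3.
  + move=> b3 H3; case: (eqVneq (g b3) b) => [e|ne].
      by apply: H2; rewrite i3.
    have lt : (g b3 < b)%O by rewrite lt_neqAle ne i2.
    case: (leP b3 b') => // h.
    have := gmono _ _ (ltW h); rewrite gb' => h2.
    by move: (lt_le_trans lt h2); rewrite ltxx.
  + by rewrite i3.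
Qed.

Lemma HNg1 : is_grading piN. Proof. by case: HNg. Qed.

Lemma piN_scale c a e r x : homog piR a r -> homog piN e x ->
  piN c (r *: x) = if c == actB a e then r *: x else 0.
Proof. by move=> Hr Hx; apply: (gr_homog HNg1); case: HNg => _; apply. Qed.

Lemma SUMA (Sa : seq A) b (f : 'rV[R]_n) i : f 0 i = \sum_(a <- Sa) piR a (f 0 i) ->
  \sum_(a <- Sa) (if actB a (bdeg i) == b then piR a (f 0 i) else 0) = (piB b f) 0 i.
Proof.
move=> Ea; rewrite piB_E; case: ifP => [/eqP H|H].
  rewrite {2}Ea piR_sum; apply: eq_bigr => a _; rewrite piR_idem.
  case: (eqVneq (actB a (bdeg i)) b) => [Hab|ne].
    by rewrite (@eps_spec b i a Hab) eqxx.
  case: (eqVneq (eps b i) a) => // ea.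
  by rewrite -ea H eqxx in ne.
rewrite big1 // => a _; case: (eqVneq (actB a (bdeg i)) b) => // Hab.
by rewrite (@eps_spec b i a Hab) Hab eqxx in H.
Qed.

Lemma COMB p b c : (forall c', piB c' p != 0 -> (c' <= b)%O) -> (b <= c)%O ->
  piN c (comb p m) = if c == b then comb (piB b p) (fun i => piN (bdeg i) (m i)) else 0.
Proof.
move=> Hp Hbc; rewrite /comb (gr_sum HNg1).
have -> : (if c == b then \sum_(i < n) piB b p 0 i *: piN (bdeg i) (m i) else 0) =
   \sum_(i < n) (if c == b then piB b p 0 i *: piN (bdeg i) (m i) else 0).
  by case: ifP => // _; rewrite big1.
apply: eq_bigr => i _.
have [Sa [HSa Ea]] := piR_dec (p 0 i).
have [Se [HSe Ee]] := gr_dec HNg1 (m i).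
rewrite {1}Ea {1}Ee scaler_suml (gr_sum HNg1).
pose X a := (actB a (bdeg i) == b) && (c == b).
have E1 : forall a, piN c (piR a (p 0 i) *: \sum_(e <- Se) piN e (m i)) =
     (if X a then piR a (p 0 i) else 0) *: piN (bdeg i) (m i).
  move=> a; rewrite [in RHS]Ee (gr_sum HNg1) scaler_sumr scaler_sumr (gr_sum HNg1).
  apply: eq_bigr => e _.
  rewrite (@piN_scale c a e); last by rewrite /homog (gr_idem HNg1) eqxx.
    2: by rewrite /homog piR_idem eqxx.
  rewrite (gr_idem HNg1).
  case: (eqVneq (piR a (p 0 i)) 0) => [->|nzR]; first by rewrite !(scale0r, scaler0, if_same).
  case: (eqVneq (piN e (m i)) 0) => [->|nzN]; first by rewrite !(scale0r, scaler0, if_same).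
  have he : (e <= bdeg i)%O by apply: (Hdeg i).2.
  have hb : (actB a (bdeg i) <= b)%O.
    apply: Hp; apply/eqP => H0; move: nzR.
    by rewrite -(@piB_Ea _ p i a (erefl _)) H0 mxE eqxx.
  have h1 : (actB a e <= actB a (bdeg i))%O by apply: monB.
  have -> : (c == actB a e) = (e == bdeg i) && X a.
    rewrite /X; apply/idP/idP.
      move=> /eqP Ec.
      have cb : c = b by apply/le_anti; rewrite Hbc Ec (le_trans h1 hb).
      have e2 : actB a (bdeg i) = b by apply/le_anti; rewrite hb /= -cb Ec h1.
      have e3 : e = bdeg i by apply: (canB (a := a)); rewrite -Ec cb e2.
      by rewrite e3 e2 cb !eqxx.
    by move=> /andP [/eqP E3 /andP [/eqP E4 /eqP E5]]; rewrite E3 E4 E5.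
  rewrite [bdeg i == e]eq_sym.
  case: (e == bdeg i); case: (X a); by rewrite /= ?scale0r ?scaler0.
under eq_bigr => a _ do rewrite E1.
rewrite -scaler_suml /X; clear E1 X.
case: (eqVneq c b) => [_|ne].
  under eq_bigr => a _ do rewrite andbT.
  by rewrite (@SUMA Sa b p i Ea).
under eq_bigr => a _ do rewrite andbF.
by rewrite big1 ?scale0r.
Qed.

Lemma span_mono (V : lmodType R) (G G' : V -> Prop) y :
  (forall z, G z -> G' z) -> spanP G y -> spanP G' y.
Proof. by move=> H [s0 [Hs Hc]]; exists s0; split => // i; apply: H. Qed.

Lemma main_core (kk : nat) (s h : 'I_kk -> 'rV[R]_n)
  (Hshom : forall j, exists b, homog piB b (s j))
  (Hh1 : forall j, comb (s j) m = comb (h j) m)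
  (Hh2 : forall j, comb (s j) m = 0 -> h j = 0)
  (Hh3 : forall j d, comb (s j) m != 0 -> is_deg piN (comb (s j) m) d ->
           forall b, piB b (h j) != 0 -> (b <= d)%O)
  (Hmac : macaulay_basis piF' (syz (fun i => piN (bdeg i) (m i))) s) :
  macaulay_basis piF' (syz m) (fun j => s j - h j).
Proof.
have key : forall j, exists b, is_deg piB (s j - h j) b /\ piB b (s j - h j) = s j.
  move=> j; have [b Hb] := Hshom j.
  have [nzs syzs] := Hmac.1 j.
  have sdeg : forall c, piB c (s j) = if c == b then s j else 0 by move=> c; apply: piB_homog.
  have hz : forall c, (b <= c)%O -> piB c (h j) = 0.
    case: (eqVneq (comb (s j) m) 0) => [E0|nE].
      by move=> c _; rewrite (Hh2 j E0) piB0.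
    have hN : forall c, (b <= c)%O -> piN c (comb (s j) m) = 0.
      move=> c bc; rewrite (@COMB (s j) b c _ bc).
        by rewrite Hb; case: ifP => // _; exact: syzs.
      by move=> c'; rewrite sdeg; case: (eqVneq c' b) => [->|]; rewrite ?eqxx.
    have [d Hd] : exists d, is_deg piN (comb (s j) m) d.
      have [S [HS E]] := gr_dec HNg1 (comb (s j) m).
      apply: (@deg_exists _ _ _ _ _ S); last exact: gr_nz HNg1 _ nE.
      by move=> i; apply: contraR => /HS ->; rewrite eqxx.
    have db : (d < b)%O.
      rewrite ltNge; apply/negP => bd; by move: Hd.1; rewrite hN // eqxx.
    move=> c bc; apply/eqP; apply/negPn/negP => nz.
    have cd := Hh3 j d nE Hd c nz.
    by move: (lt_le_trans (le_lt_trans cd db) bc); rewrite ltxx.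
  have top : piB b (s j - h j) = s j by rewrite piBB Hb hz // subr0.
  exists b; split => //; split; first by rewrite top.
  move=> c; case: (leP c b) => // bc.
  by rewrite piBB sdeg (gt_eqF bc) hz ?(ltW bc) // subrr eqxx.
have part1 : forall j, s j - h j != 0 /\ syz m (s j - h j).
  move=> j; split.
    have [b [[nz _] _]] := key j; apply/eqP => E0; by move: nz; rewrite E0 piB0 eqxx.
  rewrite /syz; have -> : comb (s j - h j) m = comb (s j) m - comb (h j) m.
    by rewrite /comb -sumrB; apply: eq_bigr => i _; rewrite !mxE scalerBl.
  by rewrite Hh1 subrr.
split => // y.
have G2H2 : forall z, (exists j, is_lf piF' (s j - h j) z) -> (exists j, is_lf piF' (s j) z).
  move=> z [j Hj]; exists j; have [b [Hb top]] := key j.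
  by rewrite -top; apply/(LF z Hb).
have G1H1 : forall z, (exists p, [/\ syz m p, p != 0 & is_lf piF' p z]) ->
    exists p, [/\ syz (fun i => piN (bdeg i) (m i)) p, p != 0 & is_lf piF' p z].
  move=> z [p [sp nzp lfp]]; have [b Hb] := piB_deg p nzp.
  exists (piB b p); split.
  - have := @COMB p b b Hb.2 (lexx b); rewrite eqxx sp (gr0 HNg1) => E.
    by rewrite /syz -E.
  - exact: Hb.1.
  - exact/(LF z Hb).
split => Hy.
  apply: (span_mono (G := fun z => exists j, is_lf piF' (s j) z)).
    move=> z [j Hj]; exists j; have [b [Hb top]] := key j.
    by apply/(LF z Hb); rewrite top.
  apply/Hmac.2; exact: span_mono G1H1 Hy.
apply: span_mono Hy => z [j Hj]; have [nz sy] := part1 j; by exists (s j - h j); split.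
Qed.

End Main.

Unset Implicit Arguments.

Theorem mainTheorem15
  (k : fieldType) (R : comAlgType k) (A : nmodType) (leA : rel A)
  (dB : Order.disp_t) (B : orderType dB) (dB' : Order.disp_t) (B' : orderType dB')
  (actB : A -> B -> B) (actB' : A -> B' -> B')
  (N : lmodType R) (piR : A -> R -> R) (piN : B -> N -> N) (M : N -> Prop)
  (* standing setup *)
  (HA1 : ordered_monoid leA) (HA2 : cancellative_fg_monoid A)
  (HR1 : graded_algebra piR) (HR2 : noetherian_ring R)
  (HB : ordered_action leA actB) (HB'0 : ordered_action leA actB')
  (HN1 : graded_module piR actB piN) (HN2 : noetherian_mod N)
  (HM : is_submod M)
  (* Macaulay basis X = {m_1,...,m_n} of M, b_i = deg m_i *)
  (n : nat) (m : 'I_n -> N) (bdeg : 'I_n -> B)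
  (Hdeg : forall i, is_deg piN (m i) (bdeg i))
  (HX : macaulay_basis piN M m)
  (* homogeneous generators s_1..s_k of Syz(lf m_1,...,lf m_n) *)
  (kk : nat) (s : 'I_kk -> 'rV[R]_n)
  (Hshom : forall j, exists b, homog (assoc_grading piR actB bdeg) b (s j))
  (Hsgen : forall f, syz (fun i => piN (bdeg i) (m i)) f <->
                     spanP (fun y => exists j, y = s j) f)
  (* the h_j *)
  (h : 'I_kk -> 'rV[R]_n)
  (Hh1 : forall j, comb (s j) m = comb (h j) m)
  (Hh2 : forall j, comb (s j) m = 0 -> h j = 0)
  (Hh3 : forall j d, comb (s j) m != 0 -> is_deg piN (comb (s j) m) d ->
           forall b, assoc_grading piR actB bdeg b (h j) != 0 -> (b <= d)%O)
  (* a B'-grading of R^n refining the associated B-grading *)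
  (piF' : B' -> 'rV[R]_n -> 'rV[R]_n)
  (HF' : graded_module piR actB' piF')
  (Href : refines actB actB' (assoc_grading piR actB bdeg) piF')
  (Hmac : macaulay_basis piF' (syz (fun i => piN (bdeg i) (m i))) s) :
  macaulay_basis piF' (syz m) (fun j => s j - h j).
Proof.
have [g [gmono _ gref]] := Href.
have [[_ _ _] [_ monB canA canB]] := HB.
exact: (main_core g HR1.1 HN1 HF'.1 canA canB monB gmono gref Hdeg h Hshom Hh1 Hh2 Hh3 Hmac).
Qed.
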